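(* Let $M$ be an object of an abelian category $\mathcal{A}$. Then: (1) $M$ is strongly self-Rickart if and only if $M$ is self-Rickart and ${\rm End}_{\mathcal{A}}(M)$ is an abelian ring. (2) $M$ is dual strongly self-Rickart if and only if $M$ is dual self-Rickart and ${\rm End}_{\mathcal{A}}(M)$ is an abelian ring.
   Context: A ring is abelian if every idempotent element is central. A morphism $f:X\to Y$ is a section if $f'f=1_X$ for some $f'$, a retraction if $ff'=1_Y$ for some $f'$. A monomorphism $k:K\to M$ is fully invariant if for every $h:M\to M$ there is $\alpha:K\to K$ with $hk=k\alpha$; an epimorphism $c:M\to C$ is fully coinvariant if for every $h:M\to M$ there is $\gamma:C\to C$ with $ch=\gamma c$. $M$ is self-Rickart if the kernel of every endomorphism of $M$ is a section; dual self-Rickart if the cokernel of every endomorphism of $M$ is a retraction; strongly self-Rickart if the kernel of every endomorphism of $M$ is a fully invariant section; dual strongly self-Rickart if the cokernel of every endomorphism of $M$ is a fully coinvariant retraction. *)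

(* Defs.v *)
(* A hand-rolled (honest) notion of abelian category:
   a preadditive category (Hom-sets are Z-modules, composition bilinear)
   with a zero object, binary biproducts, kernels and cokernels of every
   morphism, in which every monomorphism is a kernel and every epimorphism
   is a cokernel. *)
From HB Require Import structures.
From mathcomp Require Import all_boot all_algebra.
Set Implicit Arguments. Unset Strict Implicit. Unset Printing Implicit Defensive.
Import GRing.Theory.
Local Open Scope ring_scope.

Record preadditive := Preadditive {
  Obj :> Type;
  Hom : Obj -> Obj -> zmodType;
  mcomp : forall X Y Z : Obj, Hom Y Z -> Hom X Y -> Hom X Z;
  idm : forall X : Obj, Hom X X;
  compA : forall (W X Y Z : Obj) (f : Hom Y Z) (g : Hom X Y) (h : Hom W X),
      mcomp f (mcomp g h) = mcomp (mcomp f g) h;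
  comp1m : forall (X Y : Obj) (f : Hom X Y), mcomp (idm Y) f = f;
  compm1 : forall (X Y : Obj) (f : Hom X Y), mcomp f (idm X) = f;
  compDl : forall (X Y Z : Obj) (f g : Hom Y Z) (h : Hom X Y),
      mcomp (f + g) h = mcomp f h + mcomp g h;
  compDr : forall (X Y Z : Obj) (f : Hom Y Z) (g h : Hom X Y),
      mcomp f (g + h) = mcomp f g + mcomp f h
}.

Arguments mcomp {p X Y Z}.
Arguments idm {p}.

Section Notions.
Variable C : preadditive.

Definition is_mono (A B : C) (f : Hom A B) : Prop :=
  forall (X : C) (g h : Hom X A), mcomp f g = mcomp f h -> g = h.

Definition is_epi (A B : C) (f : Hom A B) : Prop :=
  forall (X : C) (g h : Hom B X), mcomp g f = mcomp h f -> g = h.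

Definition is_kernel (M N K : C) (f : Hom M N) (k : Hom K M) : Prop :=
  mcomp f k = 0 /\
  forall (X : C) (g : Hom X M), mcomp f g = 0 ->
    exists! u : Hom X K, mcomp k u = g.

Definition is_cokernel (M N Q : C) (f : Hom M N) (c : Hom N Q) : Prop :=
  mcomp c f = 0 /\
  forall (X : C) (g : Hom N X), mcomp g f = 0 ->
    exists! u : Hom Q X, mcomp u c = g.

Definition is_zero_object (Z : C) : Prop := idm Z = 0.

Definition is_biproduct (A B P : C) (i1 : Hom A P) (i2 : Hom B P)
    (p1 : Hom P A) (p2 : Hom P B) : Prop :=
  [/\ mcomp p1 i1 = idm A, mcomp p2 i2 = idm B,
      mcomp p1 i2 = 0, mcomp p2 i1 = 0
    & mcomp i1 p1 + mcomp i2 p2 = idm P].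

Definition is_abelian : Prop :=
  [/\ (exists Z : C, is_zero_object Z),
      (forall A B : C, exists (P : C) (i1 : Hom A P) (i2 : Hom B P)
        (p1 : Hom P A) (p2 : Hom P B), is_biproduct i1 i2 p1 p2),
      ((forall (M N : C) (f : Hom M N), exists (K : C) (k : Hom K M), is_kernel f k) /\
       (forall (M N : C) (f : Hom M N), exists (Q : C) (c : Hom N Q), is_cokernel f c)),
      (forall (A B : C) (f : Hom A B), is_mono f ->
        exists (Q : C) (g : Hom B Q), is_kernel g f)
    & (forall (A B : C) (f : Hom A B), is_epi f ->
        exists (K : C) (g : Hom K A), is_cokernel g f)].

Definition is_section (X Y : C) (f : Hom X Y) : Prop :=
  exists f' : Hom Y X, mcomp f' f = idm X.

Definition is_retraction (X Y : C) (f : Hom X Y) : Prop :=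
  exists f' : Hom Y X, mcomp f f' = idm Y.

Definition fully_invariant (K M : C) (k : Hom K M) : Prop :=
  forall h : Hom M M, exists alpha : Hom K K, mcomp h k = mcomp k alpha.

Definition fully_coinvariant (M Q : C) (c : Hom M Q) : Prop :=
  forall h : Hom M M, exists gamma : Hom Q Q, mcomp c h = mcomp gamma c.

(* "the kernel" is read as: every kernel (they are all isomorphic) *)
Definition self_rickart (M : C) : Prop :=
  forall (f : Hom M M) (K : C) (k : Hom K M), is_kernel f k -> is_section k.

Definition dual_self_rickart (M : C) : Prop :=
  forall (f : Hom M M) (Q : C) (c : Hom M Q), is_cokernel f c -> is_retraction c.

Definition strongly_self_rickart (M : C) : Prop :=
  forall (f : Hom M M) (K : C) (k : Hom K M), is_kernel f k ->
    fully_invariant k /\ is_section k.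

Definition dual_strongly_self_rickart (M : C) : Prop :=
  forall (f : Hom M M) (Q : C) (c : Hom M Q), is_cokernel f c ->
    fully_coinvariant c /\ is_retraction c.

End Notions.

Record abelianCategory := AbelianCategory {
  ab_cat :> preadditive;
  ab_axiom : is_abelian ab_cat
}.

Definition End (C : preadditive) (M : C) : Type := Hom M M.
HB.instance Definition _ (C : preadditive) (M : C) :=
  GRing.Zmodule.on (End M).

Section EndRing.
Variables (C : preadditive) (M : C).
Let mulE (f g : End M) : End M := mcomp f g.
Lemma End_mulA : associative mulE.
Proof. by move=> f g h; rewrite /mulE compA. Qed.
Lemma End_mul1 : left_id (idm M : End M) mulE.
Proof. by move=> f; rewrite /mulE comp1m. Qed.
Lemma End_mulr1 : right_id (idm M : End M) mulE.
Proof. by move=> f; rewrite /mulE compm1. Qed.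
Lemma End_mulDl : left_distributive mulE +%R.
Proof. by move=> f g h; rewrite /mulE compDl. Qed.
Lemma End_mulDr : right_distributive mulE +%R.
Proof. by move=> f g h; rewrite /mulE compDr. Qed.
End EndRing.

HB.instance Definition _ (C : preadditive) (M : C) :=
  GRing.Zmodule_isPzRing.Build (End M)
    (@End_mulA C M) (@End_mul1 C M) (@End_mulr1 C M)
    (@End_mulDl C M) (@End_mulDr C M).

Definition abelian_ring (R : pzRingType) : Prop :=
  forall e : R, e * e = e -> forall x : R, e * x = x * e.

(* Main.v *)
Require Import Defs.
From mathcomp Require Import all_boot all_algebra.
Set Implicit Arguments. Unset Strict Implicit. Unset Printing Implicit Defensive.
Import GRing.Theory.
Local Open Scope ring_scope.

Section H.
Variable C : preadditive.

Lemma comp0m (X Y Z : C) (h : Defs.Hom X Y) : mcomp (0 : Defs.Hom Y Z) h = 0.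
Proof.
have H := Defs.compDl (0 : Defs.Hom Y Z) 0 h; rewrite addr0 in H.
by apply: (addrI (mcomp (0 : Defs.Hom Y Z) h)); rewrite addr0 -H.
Qed.

Lemma compm0 (X Y Z : C) (f : Defs.Hom Y Z) : mcomp f (0 : Defs.Hom X Y) = 0.
Proof.
have H := Defs.compDr f (0 : Defs.Hom X Y) 0; rewrite addr0 in H.
by apply: (addrI (mcomp f (0 : Defs.Hom X Y))); rewrite addr0 -H.
Qed.

Lemma compBl (X Y Z : C) (f g : Defs.Hom Y Z) (h : Defs.Hom X Y) :
  mcomp (f - g) h = mcomp f h - mcomp g h.
Proof.
rewrite Defs.compDl; congr (_ + _).
apply: (addrI (mcomp g h)); by rewrite -Defs.compDl subrr comp0m subrr.
Qed.

Lemma compBr (X Y Z : C) (f : Defs.Hom Y Z) (g h : Defs.Hom X Y) :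
  mcomp f (g - h) = mcomp f g - mcomp f h.
Proof.
rewrite Defs.compDr; congr (_ + _).
apply: (addrI (mcomp f h)); by rewrite -Defs.compDr subrr compm0 subrr.
Qed.
End H.

Lemma central_of (R : pzRingType) (e x : R) :
  e * (x * (1 - e)) = 0 -> (1 - e) * (x * e) = 0 -> e * x = x * e.
Proof.
rewrite !mulrBr !mulr1 !mulrBl !mul1r !mulrA.
move=> /eqP; rewrite subr_eq0 => /eqP H1.
by move/eqP; rewrite subr_eq0 => /eqP H2; rewrite H1 H2.
Qed.

Theorem proposition2p14 (A : abelianCategory) (M : A) :
  (strongly_self_rickart M <-> self_rickart M /\ abelian_ring (End M)) /\
  (dual_strongly_self_rickart M <-> dual_self_rickart M /\ abelian_ring (End M)).
Proof.
case: (ab_axiom A) => _ _ [Hker Hcok] _ _.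
split; split.
- move=> HS; split; first by move=> f K k /HS [].
  move=> e He x; apply: central_of.
  + change (mcomp e (mcomp x (idm M - e)) = 0).
    have [K [k Hk]] := Hker M M e.
    have [Hfi _] := HS e K k Hk.
    case: Hk => Hek Hu.
    have [u [Hu1 _]] : exists! u : Defs.Hom M K, mcomp k u = idm M - e.
      apply: Hu; rewrite compBr Defs.compm1; have -> : mcomp e e = e by exact: He.
      exact: subrr.
    have [al Hal] := Hfi x.
    by rewrite -Hu1 (Defs.compA x k u) Hal !Defs.compA Hek !comp0m.
  + change (mcomp (idm M - e) (mcomp x e) = 0).
    have [K [k Hk]] := Hker M M (idm M - e).
    have [Hfi _] := HS _ K k Hk.
    case: Hk => Hek Hu.
    have [u [Hu1 _]] : exists! u : Defs.Hom M K, mcomp k u = e.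
      apply: Hu; rewrite compBl Defs.comp1m.
      have -> : mcomp e e = e by exact: He.
      exact: subrr.
    have [al Hal] := Hfi x.
    by rewrite -{2}Hu1 (Defs.compA x k u) Hal !Defs.compA Hek !comp0m.
- case=> HR Hab f K k Hk; have [k' Hk'] := HR f K k Hk; split; last by exists k'.
  move=> h; exists (mcomp k' (mcomp h k)).
  have He : (mcomp k k' : End M) * mcomp k k' = mcomp k k'.
    by change (mcomp (mcomp k k') (mcomp k k') = mcomp k k'); rewrite -(Defs.compA k k' (mcomp k k')) (Defs.compA k' k k') Hk' Defs.comp1m.
  have := Hab _ He h; change (mcomp (mcomp k k') h = mcomp h (mcomp k k') -> mcomp h k = mcomp k (mcomp k' (mcomp h k))).
  move=> E; rewrite !Defs.compA E -(Defs.compA h (mcomp k k') k) -(Defs.compA k k' k) Hk' Defs.compm1 //.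
- move=> HS; split; first by move=> f Q c /HS [].
  move=> e He x; apply: central_of.
  + change (mcomp e (mcomp x (idm M - e)) = 0).
    have [Q [c Hc]] := Hcok M M (idm M - e).
    have [Hfi _] := HS _ Q c Hc.
    case: Hc => Hce Hu.
    have [u [Hu1 _]] : exists! u : Defs.Hom Q M, mcomp u c = e.
      apply: Hu; rewrite compBr Defs.compm1.
      have -> : mcomp e e = e by exact: He.
      exact: subrr.
    have [ga Hga] := Hfi x.
    by rewrite -{1}Hu1 -Defs.compA (Defs.compA c x) Hga -Defs.compA Hce !compm0.
  + change (mcomp (idm M - e) (mcomp x e) = 0).
    have [Q [c Hc]] := Hcok M M e.
    have [Hfi _] := HS e Q c Hc.
    case: Hc => Hce Hu.
    have [u [Hu1 _]] : exists! u : Defs.Hom Q M, mcomp u c = idm M - e.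
      apply: Hu; rewrite compBl Defs.comp1m; have -> : mcomp e e = e by exact: He.
      exact: subrr.
    have [ga Hga] := Hfi x.
    by rewrite -Hu1 -Defs.compA (Defs.compA c x) Hga -Defs.compA Hce !compm0.
- case=> HR Hab f Q c Hc; have [c' Hc'] := HR f Q c Hc; split; last by exists c'.
  move=> h; exists (mcomp c (mcomp h c')).
  have He : (mcomp c' c : End M) * mcomp c' c = mcomp c' c.
    by change (mcomp (mcomp c' c) (mcomp c' c) = mcomp c' c); rewrite -(Defs.compA c' c (mcomp c' c)) (Defs.compA c c' c) Hc' Defs.comp1m.
  have := Hab _ He h; change (mcomp (mcomp c' c) h = mcomp h (mcomp c' c) -> mcomp c h = mcomp (mcomp c (mcomp h c')) c).
  move=> E; rewrite -(Defs.compA c (mcomp h c') c) -(Defs.compA h c' c) -E (Defs.compA c (mcomp c' c) h) (Defs.compA c c' c) Hc' Defs.comp1m //.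
Qed.
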